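(* For every integer $b\ge0$, let $\mathcal{P}(b)$ be the set of unordered partitions of $b$ and for $q\in\mathcal{P}(b)$ let $o(q)$ be the number of parts of $q$ equal to $1$. Then \[ \operatorname{trace}(A_b)=\sum_{q\in\mathcal{P}(b)}2^{o(q)}. \]
   Context: For an integer $b\ge 0$, an ordered partition of $b$ is a finite sequence $(q_1,\ldots,q_k)$ of positive integers summing to $b$ (for $b=0$ the only one is the empty sequence). An ordered partition $(q_1,\ldots,q_k)$ with $k\ge1$ is nontrivially embedded into an ordered partition $(r_1,\ldots,r_\ell)$ by a choice of indices $1\le i_2<\cdots<i_k\le \ell$ with $q_j\le r_{i_j}$ for $2\le j\le k$; different index tuples count as different embeddings. A card for $b$ balls is either (i) a trivial card, given by an ordered partition $q$ of $b$, with left and right partitions both $q$; or (ii) a throw card, given by ordered partitions $q$ ($k\ge1$ parts) and $r$ of $b$ together with a nontrivial embedding of $q$ into $r$, with left partition $q$ and right partition $r$. Different index tuples give different cards, and a throw card is distinct from the trivial card even when $q=r$. $A_b$ is the square matrix with rows and columns indexed by the ordered partitions of $b$ whose $(u,v)$ entry is the number of cards for $b$ balls with left partition $u$ and right partition $v$. *)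

(* Defs.v *)
From mathcomp Require Import all_boot.
Set Implicit Arguments. Unset Strict Implicit. Unset Printing Implicit Defensive.

Definition is_opart (b : nat) (s : seq nat) : bool :=
  all (fun x => 0 < x) s && (sumn s == b).

(* An unordered partition of b, represented canonically as a nonincreasing
   sequence of positive integers summing to b. *)
Definition is_upart (b : nat) (s : seq nat) : bool :=
  sorted geq s && all (fun x => 0 < x) s && (sumn s == b).

Definition ones (q : seq nat) : nat := count_mem 1 q.

(* Number of nontrivial embeddings of q = (q_1,...,q_k) into r = (r_1,...,r_l):
   index tuples 1 <= i_2 < ... < i_k <= l with q_j <= r_{i_j} (2 <= j <= k).
   A strictly increasing index tuple is encoded by the bit mask m of length l
   selecting the positions {i_2,...,i_k}; the condition is that the selected
   entries (mask m r) have the same length as (q_2,...,q_k) and dominate it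
   pointwise. *)
Definition nemb (q r : seq nat) : nat :=
  if q is _ :: s then
    #|[set m : (size r).-tuple bool | all2 leq s (mask m r)]|
  else 0.

(* Entry (u,v) of A_b: number of cards for b balls with left partition u and
   right partition v (one trivial card if u = v, plus one throw card per
   nontrivial embedding of u into v). *)
Definition A_entry (b : nat) (u v : seq nat) : nat :=
  (is_opart b u && is_opart b v) * ((u == v) + nemb u v).

(* Main.v *)
Require Import Defs.
From mathcomp Require Import all_boot zify.
Set Implicit Arguments. Unset Strict Implicit. Unset Printing Implicit Defensive.

Fixpoint bs (n : nat) : seq (seq bool) :=
  if n is n'.+1 then map (cons false) (bs n') ++ map (cons true) (bs n') else [:: [::]].

Lemma consI (T : Type) (c : T) : injective (cons c).
Proof. by move=> x y [->]. Qed.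

Lemma mem_bs n m : (m \in bs n) = (size m == n).
Proof.
elim: n m => [|n IH] m.
  by case: m.
case: m => [|c m] /=.
  by rewrite mem_cat; apply/orP => -[] /mapP[x _].
rewrite mem_cat eqSS -IH; case: c.
  rewrite (mem_map (@consI _ _)).
  by case: (m \in bs n); rewrite ?orbT //= orbF; apply/mapP => -[x _].
rewrite (mem_map (@consI _ _)).
by case: (m \in bs n); rewrite ?orbF //=; apply/mapP => -[x _].
Qed.

Lemma uniq_bs n : uniq (bs n).
Proof.
elim: n => //= n IH; rewrite cat_uniq !map_inj_uniq ?IH //; try exact: consI.
rewrite andbT /=; apply/hasP => -[x /mapP[y _ ->] /mapP[z _]] //.
Qed.

Lemma card_count n (p : pred (seq bool)) :
  #|[set m : n.-tuple bool | p m]| = count p (bs n).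
Proof.
rewrite cardsE cardE /enum_mem size_filter -(count_map val).
rewrite -enumT; move: p; apply/permP/uniq_perm.
- by rewrite map_inj_uniq ?enum_uniq //; exact: val_inj.
- exact: uniq_bs.
move=> m; rewrite mem_bs; apply/mapP/idP.
  by case=> t _ ->; rewrite size_tuple.
move=> /eqP H; exists (Tuple (introT eqP H)) => //.
by rewrite mem_enum.
Qed.

Definition g (s r : seq nat) := count (fun m => all2 leq s (mask m r)) (bs (size r)).

Lemma nembE x s r : nemb (x :: s) r = g s r.
Proof. by rewrite /nemb (card_count _ (fun m => all2 leq s (mask m r))). Qed.

Lemma g_nil s : g s [::] = (s == [::]).
Proof. by case: s. Qed.

Lemma g_cons s y r :
  g s (y :: r) = g s r + (if s is x :: s' then (x <= y) * g s' r else 0).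
Proof.
rewrite /g /= count_cat !count_map; congr (_ + _).
case: s => [|x s'] /=; first by elim: (bs (size r)).
rewrite mulnC -count_filter; case: (x <= y); rewrite ?muln1 ?muln0.
  by rewrite count_predT size_filter.
by rewrite count_pred0.
Qed.

Lemma g_small s r : size r < size s -> g s r = 0.
Proof.
elim: r s => [|y r IH] [|x s] //.
rewrite /= ltnS => H; rewrite g_cons !IH //; [by rewrite muln0 | exact: ltnW].
Qed.

Lemma g_diag s : g s s = 1.
Proof. by elim: s => // x s IH; rewrite g_cons g_small // leqnn IH. Qed.

Definition K (x : nat) (s : seq nat) :=
  count (fun j => sorted geq (x :: take j s)) (iota 0 (size s).+1).

Lemma iotaS0 n : iota 0 n.+1 = 0 :: map succn (iota 0 n).
Proof. by rewrite /= -(iotaDl 1). Qed.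

Lemma count_iotaS0 (a : pred nat) n :
  count a (iota 0 n.+1) = a 0 + count (fun i => a i.+1) (iota 0 n).
Proof. by rewrite iotaS0 /= count_map. Qed.

Lemma K_cons x y s : K x (y :: s) = 1 + (y <= x) * K y s.
Proof.
rewrite /K [size (y :: s)]/= count_iotaS0; congr (_ + _).
case: (leqP y x) => Hyx; rewrite ?mul1n ?mul0n.
  by apply: eq_count => m /=; rewrite Hyx.
by apply/eqP; rewrite -leqn0 leqNgt -has_count; apply/hasP => -[m _ /=]; rewrite leqNgt Hyx.
Qed.

Lemma gK x s : g s (x :: s) = K x s.
Proof.
elim: s x => [|y s IH] x; first by rewrite g_cons.
by rewrite g_cons g_diag IH K_cons.
Qed.

Definition D (u : seq nat) := count (fun i => sorted geq (take i u)) (iota 0 (size u).+1).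

Lemma D_diag u : D u = 1 + nemb u u.
Proof.
case: u => [|x s] //; rewrite nembE gK /D /K.
rewrite iotaS0 /= count_map; congr (_ + _).
Qed.

Lemma D_rcons v x : D (rcons v x) = D v + sorted geq (rcons v x).
Proof.
rewrite /D size_rcons -addn1 iotaD count_cat; congr (_ + _).
  apply: eq_in_count => i; rewrite mem_iota add0n ltnS => /andP[_ Hi].
  by rewrite -cats1 takel_cat.
by rewrite add0n /= addn0 take_oversize // size_rcons.
Qed.

Fixpoint cF (n b : nat) : seq (seq nat) :=
  match b with
  | 0 => [:: [::]]
  | _.+1 => if n is n'.+1 then [seq rcons v (b - k) | k <- iota 0 b, v <- cF n' k] else [::]
  end.

Lemma mem_iota0 k n : (k \in iota 0 n) = (k < n).
Proof. by rewrite mem_iota. Qed.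

Lemma cF_S n b : cF n.+1 b.+1 = [seq rcons v (b.+1 - k) | k <- iota 0 b.+1, v <- cF n k].
Proof. by []. Qed.

Lemma opart0 s : is_opart 0 s = (s == [::]).
Proof.
case: s => [|x s] //=; apply/negP => /andP[/andP[xp _] /eqP].
by move: xp; case: x.
Qed.

Lemma opart_rcons b v y : is_opart b (rcons v y) = (0 < y) && (y <= b) && is_opart (b - y) v.
Proof.
rewrite /is_opart -cats1 all_cat sumn_cat /= andbT addn0.
case: (0 < y); case: (all _ v); rewrite ?andbF //= ?andbT.
apply/eqP/andP => [<-|[Hy /eqP ->]]; first by rewrite leq_addl addnK.
by rewrite subnK.
Qed.

Lemma mem_cF n b s : b <= n -> (s \in cF n b) = is_opart b s.
Proof.
elim: n b s => [|n IH] [|b] s Hb; try by rewrite /= inE opart0.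
  by [].
rewrite cF_S.
apply/allpairsPdep/idP.
  case=> k [v [Hk Hv ->]]; rewrite mem_iota0 in Hk.
  rewrite IH in Hv; last by rewrite -ltnS (leq_trans Hk).
  by rewrite opart_rcons subn_gt0 Hk leq_subr subKn // ltnW.
case/lastP: s => [|v y]; first by [].
rewrite opart_rcons => /andP[/andP[y0 yb] Hv].
exists (b.+1 - y), v; split.
- by rewrite mem_iota0 ltn_subrL y0.
- by rewrite IH //; lia.
- by rewrite subKn.
Qed.

Lemma uniq_cF n b : uniq (cF n b).
Proof.
elim: n b => [|n IH] [|b] //; rewrite cF_S.
apply: allpairs_uniq_dep => //; first exact: iota_uniq.
move=> [k1 v1] [k2 v2] /allpairsPdep[k1' [v1' [Hk1 _ [E1 E1']]]]
  /allpairsPdep[k2' [v2' [Hk2 _ [E2 E2']]]] /= /rcons_inj [Ev Ek].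
subst; move: Hk1 Hk2; rewrite !mem_iota0 => H1 H2.
have Ek' : k1' = k2'.
  lia.
by subst.
Qed.

Lemma sum_perm (s1 s2 : seq (seq nat)) (F : seq nat -> nat) :
  uniq s1 -> uniq s2 -> s1 =i s2 -> \sum_(u <- s1) F u = \sum_(u <- s2) F u.
Proof. by move=> U1 U2 E; apply: perm_big; apply: uniq_perm. Qed.

Definition CE b := cF b b.
Definition S b := \sum_(u <- CE b) D u.
Definition N b := \sum_(u <- CE b | sorted geq u) 1.
Definition T b := \sum_(u <- CE b | sorted geq u) 2 ^ ones u.
Definition N1 b := \sum_(u <- CE b | sorted geq u && (1 \notin u)) 1.

Lemma S_rec b : S b.+1 = \sum_(0 <= k < b.+1) S k + N b.+1.
Proof.
rewrite /S /N /CE cF_S big_allpairs_dep.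
under eq_bigr do under eq_bigr do rewrite D_rcons.
under eq_bigr do rewrite big_split.
rewrite big_split; congr (_ + _).
  rewrite /index_iota subn0; apply: eq_big_seq => k; rewrite mem_iota0 => Hk.
  apply: sum_perm; rewrite ?uniq_cF // => u; rewrite !mem_cF //.
rewrite [RHS]big_mkcond big_allpairs_dep.
by apply: eq_bigr => k _; apply: eq_bigr => v _; case: sorted.
Qed.

Lemma sorted_rcons_inv v y : sorted geq (rcons v y) -> sorted geq v && all (leq y) v.
Proof.
have E : forall w, sorted geq w = sorted leq (rev w).
  by move=> w; rewrite rev_sorted.
rewrite E rev_rcons /= => H.
rewrite E (path_sorted H) /= -all_rev.
by apply: order_path_min H; exact: leq_trans.
Qed.

Lemma sorted_rcons1 v : all (fun x => 0 < x) v -> sorted geq v -> sorted geq (rcons v 1).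
Proof.
case: v => [|a t] // Hpos Hs; rewrite rcons_cons /= rcons_path; apply/andP; split => //.
by have := mem_last a t => /(allP Hpos).
Qed.

Lemma split1 b (F : seq nat -> nat) :
  \sum_(q <- CE b.+1 | sorted geq q && (1 \in q)) F q =
  \sum_(q <- CE b | sorted geq q) F (rcons q 1).
Proof.
rewrite -big_filter -[RHS]big_filter -(big_map (rcons^~ 1) xpredT F).
apply: sum_perm.
- by rewrite filter_uniq // uniq_cF.
- by rewrite map_inj_uniq ?filter_uniq ?uniq_cF //; exact: rcons_injl.
move=> q; rewrite mem_filter /CE mem_cF //.
apply/idP/mapP.
  case/lastP: q => [|v y]; first by rewrite andbF.
  case/andP=> /andP[/sorted_rcons_inv /andP[Sv Av] H1].
  rewrite opart_rcons => /andP[/andP[y0 yb] Hv].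
  have y1 : y = 1.
    move: H1; rewrite mem_rcons inE => /orP[/eqP -> //|/(allP Av) H].
    by apply/eqP; rewrite eqn_leq H y0.
  subst y; exists v => //.
  by rewrite mem_filter Sv /CE mem_cF // subn1 in Hv *.
case=> v; rewrite mem_filter /CE mem_cF // => /andP[Sv Hv] ->.
rewrite mem_rcons mem_head andbT opart_rcons /= subn1 /= Hv andbT.
by apply: sorted_rcons1 => //; case/andP: Hv.
Qed.

Lemma T_rec b : T b.+1 = 2 * T b + N1 b.+1.
Proof.
rewrite /T (bigID (fun q => 1 \in q)) /= split1; congr (_ + _).
  rewrite big_distrr /=; apply: eq_bigr => q _.
  by rewrite /ones -cats1 count_cat /= addn1 expnS.
apply: eq_bigr => q /andP[_ /count_memPn H]; by rewrite /ones H.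
Qed.

Lemma N_rec b : N b.+1 = N b + N1 b.+1.
Proof. by rewrite /N (bigID (fun q => 1 \in q)) /= split1. Qed.

Lemma TU b : T b = \sum_(0 <= k < b) T k + N b.
Proof.
elim: b => [|b IH]; first by rewrite big_geq // /T /N /CE /= !big_cons !big_nil.
rewrite T_rec N_rec big_nat_recr //=; lia.
Qed.

Lemma ST b : S b = T b.
Proof.
suff H : forall n k, k <= n -> S k = T k by exact: (H b).
elim=> [|n IH] k Hk.
  by move: Hk; rewrite leqn0 => /eqP ->; rewrite /S /T /CE /= !big_cons !big_nil.
case: (leqP k n) => Hkn; first exact: IH.
have -> : k = n.+1 by lia.
rewrite S_rec TU; congr (_ + _).
by apply: eq_big_nat => i /andP[_ Hi]; apply: IH; rewrite -ltnS.
Qed.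

Theorem theorem11 (b : nat) (P Q : seq (seq nat)) :
  uniq P -> (forall s, (s \in P) = is_opart b s) ->
  uniq Q -> (forall s, (s \in Q) = is_upart b s) ->
  \sum_(u <- P) A_entry b u u = \sum_(q <- Q) 2 ^ ones q.
Proof.
move=> UP HP UQ HQ.
transitivity (\sum_(u <- P) D u).
  by apply: eq_big_seq => u; rewrite HP /A_entry => ->; rewrite eqxx /= mul1n D_diag.
rewrite (@sum_perm P (CE b)) ?uniq_cF //; last by move=> u; rewrite HP /CE mem_cF.
rewrite -/(S b) ST /T -big_filter.
apply: sum_perm => //; first by rewrite filter_uniq // uniq_cF.
by move=> s; rewrite HQ mem_filter /CE mem_cF // /is_upart /is_opart andbA.
Qed.
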